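(* Let $K$ be an algebraically closed field of characteristic $p>0$ (in the setting below). Then there exists a sequence $x_1,x_2,\dots\in K^\vee$ such that $\{\pi(x_1),\pi(x_2),\dots\}$ is an orthogonal subset of $K^\vee/K$, where $\pi:K^\vee\to K^\vee/K$ is the canonical quotient map.
   Context: $K$ is a complete non-archimedean non-trivially valued field which is not spherically complete; $K^\vee$ is a fixed spherically complete valued field which is an immediate extension of $K$, regarded as a $K$-normed space with its absolute value. $K^\vee/K$ carries the quotient norm $\|\pi(z)\|=\inf_{a\in K}|z-a|$. A subset $S$ not containing $0$ is orthogonal if $\|\sum_i\lambda_is_i\|=\max_i\|\lambda_is_i\|$ for all finitely many distinct $s_i\in S$ and $\lambda_i\in K$. *)

(* Defs.v *)
From HB Require Import structures.
From mathcomp Require Import all_boot all_order all_algebra.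
From mathcomp Require Import boolp classical_sets reals.
Set Implicit Arguments. Unset Strict Implicit. Unset Printing Implicit Defensive.
Import Order.TTheory GRing.Theory Num.Theory.
Local Open Scope ring_scope.
Local Open Scope classical_set_scope.

Section Defs.
Variable R : realType.

Definition na_absval (F : fieldType) (v : F -> R) : Prop :=
  [/\ forall x, 0 <= v x,
      forall x, v x = 0 <-> x = 0,
      forall x y, v (x * y) = v x * v y &
      forall x y, v (x + y) <= Num.max (v x) (v y)].

Definition nontrivial_absval (F : fieldType) (v : F -> R) : Prop :=
  exists x, v x != 0 /\ v x != 1.

Definition complete_absval (F : fieldType) (v : F -> R) : Prop :=
  forall u : nat -> F,
    (forall e, 0 < e -> exists N, forall m n, (N <= m)%N -> (N <= n)%N ->
        v (u m - u n) < e) ->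
    exists l, forall e, 0 < e -> exists N, forall n, (N <= n)%N -> v (u n - l) < e.

Definition cball (F : fieldType) (v : F -> R) (c : F) (r : R) : set F :=
  [set x | v (x - c) <= r].

Definition sph_complete (F : fieldType) (v : F -> R) : Prop :=
  forall (c : nat -> F) (r : nat -> R),
    (forall n, 0 < r n) ->
    (forall n, cball v (c n.+1) (r n.+1) `<=` cball v (c n) (r n)) ->
    exists x, forall n, cball v (c n) (r n) x.

(* (L, vL) is an immediate valued-field extension of (K, vK) via iota:
   iota is isometric, and the value groups and residue fields coincide *)
Definition immediate_ext (K L : fieldType) (vK : K -> R) (vL : L -> R)
    (iota : K -> L) : Prop :=
  [/\ forall a, vL (iota a) = vK a,
      forall y, y != 0 -> exists a, vL y = vK a &
      forall y, vL y <= 1 -> exists a, vK a <= 1 /\ vL (y - iota a) < 1].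

Definition qnorm (K L : fieldType) (vL : L -> R) (iota : K -> L) (z : L) : R :=
  inf [set vL (z - iota a) | a in [set: K]].

(* pi(x_0), pi(x_1), ... are pairwise distinct, nonzero in L/K, and the set
   {pi(x_n)} is orthogonal in L/K for the quotient norm.  Note that
   lambda * pi(x) = pi(iota lambda * x). *)
Definition quot_orthogonal_seq (K L : fieldType) (vL : L -> R)
    (iota : K -> L) (x : nat -> L) : Prop :=
  [/\ forall n, ~ (exists a, x n = iota a),
      forall m n, m <> n -> ~ (exists a, x m - x n = iota a) &
      forall (s : seq nat), uniq s -> forall lam : nat -> K,
        qnorm vL iota (\sum_(i <- s) iota (lam i) * x i)
        = \big[Num.max/0]_(i <- s) qnorm vL iota (iota (lam i) * x i)].
End Defs.

(* Main.v *)
Require Import Defs.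
From HB Require Import structures.
From mathcomp Require Import all_boot all_order all_algebra.
From mathcomp Require Import boolp classical_sets reals.
From mathcomp Require Import ring lra.
Import Order.TTheory GRing.Theory Num.Theory.
Local Open Scope ring_scope.
Set Implicit Arguments. Unset Strict Implicit. Unset Printing Implicit Defensive.

Lemma av0 (R : realType) (F : fieldType) (v : F -> R) : na_absval v -> v 0 = 0.
Proof. by case=> _ h _ _; apply/h. Qed.

Lemma av1 (R : realType) (F : fieldType) (v : F -> R) : na_absval v -> v 1 = 1.
Proof.
case=> h0 h hM _; have : v 1 * v 1 = v 1 * 1 by rewrite -hM mulr1 mulr1.
move/mulfI; apply; apply/eqP => /h /eqP; by rewrite oner_eq0.
Qed.

Lemma avN (R : realType) (F : fieldType) (v : F -> R) x : na_absval v -> v (- x) = v x.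
Proof.
move=> hv; have h1 := av1 hv; case: hv => h0 h hM _.
have e : v (-1) * v (-1) = 1 by rewrite -hM mulrNN mulr1.
have e1 : v (-1) = 1.
  have := h0 (-1); move: e; set t := v (-1) => e t0.
  have : (t - 1) * (t + 1) = 0 by rewrite mulrDr !mulrBl e; ring.
  move/eqP; rewrite mulf_eq0 => /orP[]; first by rewrite subr_eq0 => /eqP.
  by rewrite addr_eq0 => /eqP et; move: t0; rewrite et oppr_ge0 ler10.
by rewrite -mulN1r hM e1 mul1r.
Qed.

Lemma avBC (R : realType) (F : fieldType) (v : F -> R) x y : na_absval v -> v (x - y) = v (y - x).
Proof. by move=> hv; rewrite -avN // opprB. Qed.

Lemma avD (R : realType) (F : fieldType) (v : F -> R) x y : na_absval v ->
  v (x + y) <= Num.max (v x) (v y).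
Proof. by case. Qed.

Lemma avM (R : realType) (F : fieldType) (v : F -> R) x y : na_absval v ->
  v (x * y) = v x * v y.
Proof. by case. Qed.

Lemma avge0 (R : realType) (F : fieldType) (v : F -> R) x : na_absval v -> 0 <= v x.
Proof. by case. Qed.

Lemma av_eq0 (R : realType) (F : fieldType) (v : F -> R) x : na_absval v -> (v x = 0) <-> x = 0.
Proof. by case. Qed.

Lemma av_sum (R : realType) (F : fieldType) (v : F -> R) (I : Type) (s : seq I) (f : I -> F) :
  na_absval v -> v (\sum_(i <- s) f i) <= \big[Num.max/0]_(i <- s) v (f i).
Proof.
move=> hv; elim: s => [|a s ih]; first by rewrite !big_nil av0.
rewrite !big_cons; apply: le_trans (avD _ _ hv) _.
by rewrite ge_max !le_max lexx ih orbT.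
Qed.

Lemma av_prod (R : realType) (F : fieldType) (v : F -> R) (I : Type) (s : seq I) (f : I -> F) :
  na_absval v -> v (\prod_(i <- s) f i) = \prod_(i <- s) v (f i).
Proof.
move=> hv; elim: s => [|a s ih]; first by rewrite !big_nil av1.
by rewrite !big_cons avM // ih.
Qed.

Lemma avX (R : realType) (F : fieldType) (v : F -> R) x n :
  na_absval v -> v (x ^+ n) = v x ^+ n.
Proof.
move=> hv; elim: n => [|n ih]; first by rewrite !expr0 av1.
by rewrite !exprS avM // ih.
Qed.

Definition Bd (R : realType) (F : fieldType) (v : F -> R) (r : R) (S : {poly F}) (B : R) :=
  forall i, v (S`_i) * r ^+ i <= B.

Lemma Bd_ge0 (R : realType) (F : fieldType) (v : F -> R) r S B :
  na_absval v -> Bd v r S B -> 0 <= B.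
Proof. by move=> hv /(_ 0%N); apply: le_trans; rewrite expr0 mulr1 avge0. Qed.

Lemma Bd1 (R : realType) (F : fieldType) (v : F -> R) r :
  na_absval v -> Bd v r 1 1.
Proof.
move=> hv [|i]; rewrite coef1 /=.
  by rewrite (av1 hv) expr0 mulr1.
by rewrite (av0 hv) mul0r ler01.
Qed.

Lemma BdZ (R : realType) (F : fieldType) (v : F -> R) r S B a :
  na_absval v -> Bd v r S B -> Bd v r (a *: S) (v a * B).
Proof.
by move=> hv hB i; rewrite coefZ (avM _ _ hv) -mulrA ler_wpM2l ?(avge0 _ hv).
Qed.

Lemma BdXsubC (R : realType) (F : fieldType) (v : F -> R) r S B c :
  na_absval v -> 0 <= r -> Bd v r S B -> Bd v r (('X - c%:P) * S) (Num.max r (v c) * B).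
Proof.
move=> hv r0 hB i; have B0 := Bd_ge0 hv hB.
rewrite mulrBl coefB coefXM coefCM.
case: i => [|n] /=.
  rewrite sub0r (avN _ hv) expr0 mulr1 (avM _ _ hv).
  have := hB 0%N; rewrite expr0 mulr1 => h0.
  by apply: ler_pM => //; rewrite ?(avge0 _ hv) // le_max lexx orbT.
apply: le_trans (ler_wpM2r (exprn_ge0 _ r0) (avD _ _ hv)) _.
rewrite maxr_pMl ?exprn_ge0 // ge_max; apply/andP; split.
  rewrite exprS mulrCA; apply: le_trans (ler_wpM2l r0 (hB n)) _.
  by apply: ler_wpM2r => //; rewrite le_max lexx.
rewrite (avN _ hv) (avM _ _ hv) -mulrA; apply: le_trans (ler_wpM2l (avge0 _ hv) (hB n.+1)) _.
by apply: ler_wpM2r => //; rewrite le_max lexx orbT.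
Qed.

Lemma Bd_prod (R : realType) (F : fieldType) (v : F -> R) r (cs : seq F) :
  na_absval v -> 0 <= r ->
  Bd v r (\prod_(c <- cs) ('X - c%:P)) (\prod_(c <- cs) Num.max r (v c)).
Proof.
move=> hv r0; elim: cs => [|c cs ih]; first by rewrite !big_nil; apply: Bd1.
by rewrite !big_cons; apply: BdXsubC.
Qed.

Lemma comp_prod_XsubC (F : fieldType) (cs : seq F) z :
  (\prod_(c <- cs) ('X - c%:P)) \Po ('X + z%:P) = \prod_(c <- cs) ('X - (c - z)%:P).
Proof.
elim: cs => [|c cs ih]; first by rewrite !big_nil comp_polyC.
rewrite !big_cons comp_polyM ih comp_polyB comp_polyX comp_polyC polyCB.
by congr (_ * _); rewrite opprB addrA.
Qed.

Lemma key_lower (R : realType) (F : fieldType) (v : F -> R) r (lead : F) (cs : seq F) (z : F) :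
  na_absval v -> 0 <= r ->
  (forall c, c \in cs -> r <= v (z - c)) ->
  forall i, v (((lead *: \prod_(c <- cs) ('X - c%:P)) \Po ('X + z%:P))`_i) * r ^+ i
     <= v ((lead *: \prod_(c <- cs) ('X - c%:P)).[z]).
Proof.
move=> hv r0 hcs i.
rewrite comp_polyZ comp_prod_XsubC hornerZ horner_prod (avM _ _ hv) (av_prod _ _ hv).
have -> : \prod_(c <- cs) ('X - (c - z)%:P) = \prod_(d <- [seq c - z | c <- cs]) ('X - d%:P).
  by rewrite big_map.
have := BdZ lead hv (Bd_prod [seq c - z | c <- cs] hv r0) i.
move/le_trans; apply; rewrite big_map; apply: ler_wpM2l; first exact: avge0.
rewrite le_eqVlt; apply/orP; left; apply/eqP; apply: eq_big_seq => c cin.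
rewrite hornerXsubC (avBC c z hv); apply/max_idPr; exact: hcs.
Qed.

Lemma frobD (Rg : comNzRingType) p (hp : p \in [pchar Rg]) (x y : Rg) n :
  (x + y) ^+ (p ^ n) = x ^+ (p ^ n) + y ^+ (p ^ n).
Proof.
apply: exprDn_pchar; rewrite (eq_pnat _ (pcharf_eq hp)) pnatX pnat_id //.
exact: pcharf_prime hp.
Qed.

Lemma frobB (Rg : comNzRingType) p (hp : p \in [pchar Rg]) (x y : Rg) n :
  (x - y) ^+ (p ^ n) = x ^+ (p ^ n) - y ^+ (p ^ n).
Proof.
rewrite frobD // exprNn_pchar //.
rewrite (eq_pnat _ (pcharf_eq hp)) pnatX pnat_id //.
exact: pcharf_prime hp.
Qed.

Lemma comp_add (L : fieldType) p (hp : p \in [pchar L]) (s : seq nat) (a : nat -> L) z :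
  (\sum_(i <- s) a i *: 'X^(p ^ i)) \Po ('X + z%:P)
  = \sum_(i <- s) a i *: 'X^(p ^ i) + ((\sum_(i <- s) a i *: 'X^(p ^ i)).[z])%:P.
Proof.
have hp' : p \in [pchar {poly L}] by apply: (rmorph_pchar (@polyC L)).
elim: s => [|i s ih]; first by rewrite !big_nil comp_poly0 horner0 add0r.
rewrite !big_cons comp_polyD ih comp_polyZ comp_Xn_poly frobD // hornerD hornerZ hornerXn.
rewrite polyCD polyCM (rmorphXn (@polyC L)) scalerDr -[a i *: (z%:P ^+ _)]mul_polyC.
by rewrite addrACA.
Qed.

Lemma coef_add (L : fieldType) p (hp : p \in [pchar L]) (s : seq nat) (a : nat -> L) c k :
  uniq s -> k \in s ->
  (\sum_(i <- s) a i *: 'X^(p ^ i) + c%:P)`_(p ^ k) = a k.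
Proof.
move=> us ks; have p1 : (1 < p)%N by apply: prime_gt1; exact: pcharf_prime hp.
rewrite coefD coefC.
have -> : (p ^ k == 0)%N = false by apply/negbTE; rewrite -lt0n expn_gt0 (ltnW p1).
rewrite addr0.
rewrite coef_sum (bigD1_seq k) //= coefZ coefXn eqxx mulr1 big1 ?addr0 // => i ik.
by rewrite coefZ coefXn eqn_exp2l // eq_sym (negbTE ik) mulr0.
Qed.

Lemma hornerP (L : fieldType) p (s : seq nat) (a : nat -> L) z :
  (\sum_(i <- s) a i *: 'X^(p ^ i)).[z] = \sum_(i <- s) a i * z ^+ (p ^ i).
Proof. by rewrite horner_sum; apply: eq_bigr => i _; rewrite hornerZ hornerXn. Qed.

Lemma lower_L (R : realType) (L : fieldType) (v : L -> R) p r (s : seq nat)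
    (a : nat -> L) (z b lead : L) (cs : seq L) :
  p \in [pchar L] -> na_absval v -> 0 <= r -> uniq s ->
  (forall c, c \in cs -> r <= v (z - c)) ->
  \sum_(i <- s) a i *: 'X^(p ^ i) - b%:P = lead *: \prod_(c <- cs) ('X - c%:P) ->
  forall k, k \in s -> v (a k) * r ^+ (p ^ k) <= v (\sum_(i <- s) a i * z ^+ (p ^ i) - b).
Proof.
move=> hp hv r0 us hcs E k ks.
have := @key_lower _ _ v r lead cs z hv r0 hcs (p ^ k); rewrite -E.
rewrite comp_polyB comp_polyC (@comp_add _ p hp s a z) -addrA -polyCB (@coef_add _ p hp s a) //.
by rewrite hornerD hornerN hornerC hornerP.
Qed.

Local Open Scope classical_set_scope.

Lemma qnorm_lbound (R : realType) (K L : fieldType) (vL : L -> R) (iota : K -> L) y :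
  na_absval vL -> has_lbound [set vL (y - iota a) | a in [set: K]].
Proof. by move=> hv; exists 0 => _ [a _ <-]; apply: avge0. Qed.

Lemma qnorm_ne (R : realType) (K L : fieldType) (vL : L -> R) (iota : K -> L) y :
  nonempty [set vL (y - iota a) | a in [set: K]].
Proof. by exists (vL (y - iota 0)); exists 0. Qed.

Lemma qnorm_lb (R : realType) (K L : fieldType) (vL : L -> R) (iota : K -> L) y a :
  na_absval vL -> qnorm vL iota y <= vL (y - iota a).
Proof. by move=> hv; apply: (ge_inf (qnorm_lbound iota y hv)); exists a. Qed.

Lemma qnorm_geP (R : realType) (K L : fieldType) (vL : L -> R) (iota : K -> L) y m :
  (forall a, m <= vL (y - iota a)) -> m <= qnorm vL iota y.
Proof. by move=> h; apply: lb_le_inf; [exact: qnorm_ne | move=> _ [a _ <-]]. Qed.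

Lemma qnorm_ge0 (R : realType) (K L : fieldType) (vL : L -> R) (iota : K -> L) y :
  na_absval vL -> 0 <= qnorm vL iota y.
Proof. by move=> hv; apply: qnorm_geP => a; apply: avge0. Qed.

Lemma qnorm_adh (R : realType) (K L : fieldType) (vL : L -> R) (iota : K -> L) y e :
  na_absval vL -> 0 < e -> exists a, vL (y - iota a) < qnorm vL iota y + e.
Proof.
move=> hv e0; have [_ [a _ <-] h] := inf_adherent e0 (conj (qnorm_ne vL iota y) (qnorm_lbound iota y hv)).
by exists a.
Qed.

Lemma qnorm_leP (R : realType) (K L : fieldType) (vL : L -> R) (iota : K -> L) y m :
  na_absval vL -> (forall e, 0 < e -> exists a, vL (y - iota a) <= m + e) -> qnorm vL iota y <= m.
Proof.
move=> hv h; apply/ler_addgt0Pr => e e0; have [a ha] := h e e0.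
exact: le_trans (@qnorm_lb _ _ _ vL iota y a hv) ha.
Qed.

Lemma qnorm_iota (R : realType) (K L : fieldType) (vL : L -> R) (iota : K -> L) a :
  na_absval vL -> qnorm vL iota (iota a) = 0.
Proof.
move=> hv; apply/le_anti; rewrite qnorm_ge0 // andbT.
by apply: le_trans (@qnorm_lb _ _ _ vL iota (iota a) a hv) _; rewrite subrr (av0 hv).
Qed.

Lemma pow_bound (R : realType) (r t : R) n :
  0 <= r -> r <= t -> t <= r + 1 ->
  t ^+ n <= r ^+ n + (t - r) * n%:R * (r + 1) ^+ n.
Proof.
move=> r0 rt t1; elim: n => [|n ih]; first by rewrite !expr0 mulr0 mul0r addr0.
have B0 : 0 <= r ^+ n by apply: exprn_ge0.
have BC : r ^+ n <= (r + 1) ^+ n by apply: lerXn2r; rewrite ?nnegrE; lra.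
have C0 : 0 <= (r + 1) ^+ n by apply: exprn_ge0; lra.
have n0 : 0 <= n%:R :> R by [].
rewrite !exprS mulrS.
set A := t ^+ n in ih *; set B := r ^+ n in B0 BC ih *; set C := (r + 1) ^+ n in C0 BC ih *.
set N := n%:R in n0 ih *.
have h1 : t * A <= t * (B + (t - r) * N * C) by apply: ler_wpM2l => //; lra.
have h2 : (t - r) * B <= (t - r) * ((r + 1) * C).
  apply: ler_wpM2l; first lra.
  have : 1 * B <= (r + 1) * C by apply: ler_pM => //; lra.
  by rewrite mul1r.
have h3 : t * ((t - r) * N * C) <= (r + 1) * ((t - r) * N * C).
  apply: ler_wpM2r => //; apply: mulr_ge0 => //; apply: mulr_ge0 => //; lra.
nra.
Qed.

Local Close Scope classical_set_scope.

Lemma bigmax_ge0 (R : realType) (I : Type) (s : seq I) (f : I -> R) :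
  0 <= \big[Num.max/0]_(i <- s) f i.
Proof.
elim: s => [|a s ih]; first by rewrite big_nil.
by rewrite big_cons le_max ih orbT.
Qed.

Lemma qnorm_formula (R : realType) (K : closedFieldType) (L : fieldType)
    (vK : K -> R) (vL : L -> R) (iota : {rmorphism K -> L}) p z (s : seq nat) (lam : nat -> K) :
  p \in [pchar K] -> na_absval vK -> na_absval vL -> (forall a, vL (iota a) = vK a) -> uniq s ->
  qnorm vL iota (\sum_(i <- s) iota (lam i) * z ^+ (p ^ i))
  = \big[Num.max/0]_(i <- s) (vK (lam i) * (qnorm vL iota z) ^+ (p ^ i)).
Proof.
move=> hp hvK hvL hI us.
have hpL : p \in [pchar L] := rmorph_pchar iota hp.
set r := qnorm vL iota z; have r0 : 0 <= r by apply: qnorm_ge0.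
set y := \sum_(i <- s) _; set M := \big[Num.max/0]_(i <- s) _.
set PK := \sum_(i <- s) lam i *: 'X^(p ^ i).
apply/le_anti/andP; split.
- apply: qnorm_leP => // e e0.
  set C := \big[Num.max/0]_(i <- s) (vK (lam i) * (p ^ i)%:R * (r + 1) ^+ (p ^ i)).
  have C0 : 0 <= C by apply: bigmax_ge0.
  set d := Num.min 1 (e / (C + 1)).
  have d0 : 0 < d by rewrite lt_min ltr01 divr_gt0 //; lra.
  have d1 : d <= 1 by rewrite ge_min lexx.
  have dC : d * C <= e.
    apply: le_trans (_ : e / (C + 1) * C <= e).
      by apply: ler_wpM2r => //; rewrite ge_min lexx orbT.
    rewrite mulrAC ler_pdivrMr; last lra.
    by apply: ler_wpM2l; [lra | lra].
  have [a ha] := @qnorm_adh _ _ _ vL iota z d hvL d0.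
  set t := vL (z - iota a) in ha.
  have rt : r <= t by apply: (@qnorm_lb _ _ _ vL iota z a hvL).
  exists (PK.[a]).
  have -> : y - iota PK.[a] = \sum_(i <- s) iota (lam i) * (z - iota a) ^+ (p ^ i).
    rewrite /y hornerP rmorph_sum -sumrB; apply: eq_bigr => i _.
    by rewrite rmorphM rmorphXn (frobB hpL) mulrBr.
  apply: le_trans (av_sum _ _ hvL) _.
  rewrite big_seq; apply: bigmax_le => [|i iins]; first by rewrite addr_ge0 ?bigmax_ge0 ?ltW.
  rewrite (avM _ _ hvL) hI (avX _ _ hvL).
  have t1 : t <= r + 1 by rewrite -/r in ha; lra.
  have hb := pow_bound (p ^ i) r0 rt t1.
  apply: le_trans (ler_wpM2l (avge0 _ hvK) hb) _.
  have hM : vK (lam i) * r ^+ (p ^ i) <= M by exact: (le_bigmax_seq 0 i xpredT (fun i => vK (lam i) * r ^+ (p ^ i)) iins isT).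
  have hC : vK (lam i) * (p ^ i)%:R * (r + 1) ^+ (p ^ i) <= C.
    exact: (le_bigmax_seq 0 i xpredT (fun i => vK (lam i) * (p ^ i)%:R * (r + 1) ^+ (p ^ i)) iins isT).
  have td : t - r <= d by rewrite -/r in ha; lra.
  have : (t - r) * (vK (lam i) * (p ^ i)%:R * (r + 1) ^+ (p ^ i)) <= d * C.
    by apply: ler_pM => //; [lra | rewrite !mulr_ge0 ?(avge0 _ hvK) ?exprn_ge0 //; lra].
  move=> h; rewrite mulrDr; set U := vK (lam i) * r ^+ (p ^ i) in hM *.
  have -> : vK (lam i) * ((t - r) * (p ^ i)%:R * (r + 1) ^+ (p ^ i))
     = (t - r) * (vK (lam i) * (p ^ i)%:R * (r + 1) ^+ (p ^ i)) by ring.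
  lra.
- apply: qnorm_geP => b.
  rewrite /M big_seq; apply: bigmax_le => [|k ks]; first exact: avge0.
  have [rs E] := closed_field_poly_normal (PK - b%:P).
  have EL : \sum_(i <- s) iota (lam i) *: 'X^(p ^ i) - (iota b)%:P
      = iota (lead_coef (PK - b%:P)) *: \prod_(c <- [seq iota x | x <- rs]) ('X - c%:P).
    have := congr1 (map_poly iota) E.
    rewrite rmorphB /= map_polyC rmorph_sum map_polyZ rmorph_prod => E'.
    rewrite big_map; apply: etrans; last apply: etrans; [|exact: E'|].
        by congr (_ - _); apply: eq_bigr => i _ /=; rewrite map_polyZ map_polyXn.
    by apply: congr1; apply: eq_bigr => c _ /=; rewrite map_polyXsubC.
  rewrite -hI; apply: (lower_L hpL hvL r0 us _ EL ks) => c.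
  by move/mapP=> [x _ ->]; apply: qnorm_lb.
Qed.

Lemma exists_z (R : realType) (K L : fieldType) (vK : K -> R) (vL : L -> R)
    (iota : {rmorphism K -> L}) :
  (forall a, vL (iota a) = vK a) -> ~ sph_complete vK -> sph_complete vL ->
  exists z, forall a, z <> iota a.
Proof.
move=> hI nsph hsph.
case: (pselect (exists z, forall a, z <> iota a)) => // nz; exfalso; apply: nsph.
have surj : forall y, exists a, y = iota a.
  move=> y; apply: contrapT => h; apply: nz; exists y => a ya; apply: h; by exists a.
move=> c rr hpos hnest.
have [x hx] : exists x, forall n, cball vL (iota (c n)) (rr n) x.
  apply: (hsph (fun n => iota (c n)) rr hpos) => n y /=.
  have [a ->] := surj y; rewrite /cball /= -rmorphB hI -rmorphB hI.
  exact: hnest.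
have [a ha] := surj x; exists a => n; have := hx n.
by rewrite /cball /= ha -rmorphB hI.
Qed.

Lemma small_inv (R : realType) (e : R) : 0 < e ->
  exists N, forall n, (N <= n)%N -> (n.+1%:R)^-1 < e.
Proof.
move=> e0; exists (Num.bound e^-1) => n hn.
have ei : 0 <= e^-1 by rewrite invr_ge0 ltW.
have h1 := archi_boundP ei.
have h2 : (Num.bound e^-1)%:R <= n.+1%:R :> R by rewrite ler_nat; apply: leqW.
rewrite -div1r ltr_pdivrMr ?ltr0Sn //.
have : e^-1 < n.+1%:R by apply: lt_le_trans h1 h2.
by rewrite -div1r ltr_pdivrMr // mulrC.
Qed.

Lemma le0_of_lt (R : realType) (x : R) : (forall e, 0 < e -> x < e) -> x <= 0.
Proof.
move=> h; rewrite leNgt; apply/negP => x0; have := h x x0; by rewrite ltxx.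
Qed.

Lemma qnorm_pos (R : realType) (K L : fieldType) (vK : K -> R) (vL : L -> R)
    (iota : {rmorphism K -> L}) z :
  na_absval vK -> na_absval vL -> complete_absval vK ->
  (forall a, vL (iota a) = vK a) -> (forall a, z <> iota a) ->
  0 < qnorm vL iota z.
Proof.
move=> hvK hvL hc hI hz.
rewrite lt_neqAle qnorm_ge0 // andbT; apply/eqP => r0.
have hu : forall n, exists a, vL (z - iota a) < (n.+1%:R)^-1.
  move=> n; have e0 : 0 < (n.+1%:R : R)^-1 by rewrite invr_gt0 ltr0Sn.
  have [a ha] := @qnorm_adh _ _ _ vL iota z _ hvL e0.
  by exists a; rewrite -r0 add0r in ha.
have [u hu'] := choice hu.
have dist : forall m n, vK (u m - u n) <= Num.max (vL (z - iota (u m))) (vL (z - iota (u n))).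
  move=> m n; rewrite -hI rmorphB.
  have -> : iota (u m) - iota (u n) = - (z - iota (u m)) + (z - iota (u n)) by ring.
  by apply: le_trans (avD _ _ hvL) _; rewrite (avN _ hvL).
have [l hl] : exists l, forall e, 0 < e -> exists N, forall n, (N <= n)%N -> vK (u n - l) < e.
  apply: hc => e e0; have [N hN] := small_inv e0; exists N => m n hm hn.
  by apply: le_lt_trans (dist m n) _; rewrite gt_max (lt_trans (hu' m)) ?hN // (lt_trans (hu' n)) ?hN.
apply: (hz l); apply/subr0_eq/(av_eq0 _ hvL); apply/le_anti; rewrite avge0 // andbT.
apply: le0_of_lt => e e0; have [N1 h1] := hl e e0; have [N2 h2] := small_inv e0.
pose n := maxn N1 N2.
have -> : z - iota l = (z - iota (u n)) + iota (u n - l) by rewrite rmorphB; ring.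
apply: le_lt_trans (avD _ _ hvL) _; rewrite gt_max hI h1 ?leq_maxl // andbT.
by apply: lt_trans (hu' n) _; apply: h2; rewrite leq_maxr.
Qed.


Unset Implicit Arguments. Set Strict Implicit.

Theorem mainTheorem3 (R : realType) (K : closedFieldType) (L : fieldType)
    (vK : K -> R) (vL : L -> R) (iota : {rmorphism K -> L}) (p : nat) :
  p \in [pchar K] ->
  na_absval vK -> nontrivial_absval vK -> complete_absval vK ->
  ~ sph_complete vK ->
  na_absval vL -> sph_complete vL -> immediate_ext vK vL iota ->
  exists x : nat -> L, quot_orthogonal_seq vL iota x.
Proof.
move=> hp hvK _ hcK nsph hvL hsph [hI _ _].
have [z hz] := exists_z hI nsph hsph.
have rpos := qnorm_pos hvK hvL hcK hI hz.
set r := qnorm vL iota z in rpos.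
have Fm := fun s lam => @qnorm_formula R K L vK vL iota p z s lam hp hvK hvL hI.
have single : forall i (lam : nat -> K),
    qnorm vL iota (iota (lam i) * z ^+ (p ^ i)) = vK (lam i) * r ^+ (p ^ i).
  move=> i lam; have := Fm [:: i] lam isT.
  rewrite !big_cons !big_nil addr0 => ->; apply/max_idPl.
  by rewrite mulr_ge0 ?(avge0 _ hvK) // exprn_ge0 // ltW.
exists (fun n => z ^+ (p ^ n)); split.
- move=> n [a ha]; have := single n (fun _ => 1).
  rewrite rmorph1 mul1r ha qnorm_iota // (av1 hvK) mul1r => /esym/eqP.
  by rewrite expf_eq0 (gt_eqF rpos) andbF.
- move=> m n mn [a ha].
  have := Fm [:: m; n] (fun i => if i == m then 1 else -1).
  rewrite /= inE andbT; have -> : (m == n) = false by apply/eqP.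
  rewrite !big_cons !big_nil eqxx; have -> : (n == m) = false by apply/eqP => e; apply: mn.
  rewrite rmorph1 rmorphN1 mul1r mulN1r addr0 ha qnorm_iota // => /(_ isT) e.
  have : r ^+ (p ^ m) <= 0.
    by rewrite e (av1 hvK) mul1r le_max lexx.
  by rewrite leNgt exprn_gt0.
- move=> s us lam; rewrite Fm //; apply: eq_bigr => i _; by rewrite single.
Qed.
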